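(* Assume $2\hat P-P+A_2^TA_2$ is symmetric positive definite. Then the eigenpairs of $\mathcal{M}_4^{-1}\mathcal{A}$ have the following structure: (i) $\mu=1$ is an eigenvalue with geometric multiplicity $p+q+d$, where $d=\dim\big(\mathcal{N}(\hat P-P)\cap\mathcal{N}(A_2)\big)$; a basis of the eigenspace consists of the $p+q$ vectors $(x_i;0;0)$, $(0;0;z_j)$, with $\{x_i\}_{i=1}^p$, $\{z_j\}_{j=1}^q$ bases of $\mathbb{R}^p$, $\mathbb{R}^q$, together with the $d$ vectors $(0;y_k;0)$, where $\{y_k\}_{k=1}^d$ is a basis of $\mathcal{N}(\hat P-P)\cap\mathcal{N}(A_2)$. (ii) If $\mu\ne1$ is an eigenvalue, every corresponding eigenvector has the form $\left(-A_1y;\,y;\,\frac{1}{\mu-1}A_2y\right)$ where $y\neq0$ satisfies $\hat P^{-1}(P-A_2^TA_2)y=\mu y$ (and conversely); the geometric multiplicity $h_\mu$ of $\mu$ is the number of linearly independent such $y$, and if $h$ is the total number of linearly independent eigenvectors for non-unit eigenvalues, then $0\le h_\mu\le h\le n$ and $\mathcal{M}_4^{-1}\mathcal{A}$ has $p+q+d+h$ linearly independent eigenvectors. (iii) All eigenvalues of $\mathcal{M}_4^{-1}\mathcal{A}$ are real and lie in the interval $(0,2)$.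
   Context: Let $A_1\in\mathbb{R}^{p\times n}$ have full column rank and $A_2\in\mathbb{R}^{q\times n}$. Set $P=A_1^TA_1$ and assume $P-A_2^TA_2$ is symmetric positive definite. Let $\hat P\in\mathbb{R}^{n\times n}$ be symmetric positive definite. Define $\mathcal{A}=\begin{pmatrix}I_p&A_1&0\\0&P&A_2^T\\0&A_2&I_q\end{pmatrix}$ and $\mathcal{M}_4=\begin{pmatrix}I_p&A_1&0\\0&\hat P&A_2^T\\0&0&I_q\end{pmatrix}$. Vectors are written $(x;y;z)$ with $x\in\mathbb{C}^p,y\in\mathbb{C}^n,z\in\mathbb{C}^q$. $\mathcal{N}(\cdot)$ denotes null space. *)

(* Defs.v *)
(* matrices over an abstract real field R : realType,
   complexified into R[i] = complex R (a numClosedFieldType). *)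
From HB Require Import structures.
From mathcomp Require Import all_boot all_order all_algebra.
From mathcomp Require Import reals.
From mathcomp Require Export complex.
Set Implicit Arguments. Unset Strict Implicit. Unset Printing Implicit Defensive.
Import Order.TTheory GRing.Theory Num.Theory.
Local Open Scope ring_scope.

Definition spd (R : realType) (k : nat) (S : 'M[R]_k) : Prop :=
  S^T = S /\ forall x : 'cV[R]_k, x != 0 -> 0 < (x^T *m S *m x) 0 0.

Definition Pmx (R : realType) p n (A1 : 'M[R]_(p, n)) : 'M[R]_n := A1^T *m A1.

(* calA = [ I_p A1 0 ; 0 P A2^T ; 0 A2 I_q ], block indices p + (n + q) *)
Definition calA (R : realType) p n q (A1 : 'M[R]_(p, n)) (A2 : 'M[R]_(q, n))
  : 'M[R]_(p + (n + q)) :=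
  block_mx 1%:M (row_mx A1 0) 0 (block_mx (Pmx A1) A2^T A2 1%:M).

(* M4 = [ I_p A1 0 ; 0 Phat A2^T ; 0 0 I_q ] *)
Definition calM4 (R : realType) p n q (A1 : 'M[R]_(p, n)) (A2 : 'M[R]_(q, n))
  (Ph : 'M[R]_n) : 'M[R]_(p + (n + q)) :=
  block_mx 1%:M (row_mx A1 0) 0 (block_mx Ph A2^T 0 1%:M).

Definition toCmx (R : realType) m k (M : 'M[R]_(m, k)) : 'M[R[i]]_(m, k) :=
  map_mx (real_complex R) M.

Definition precM (R : realType) p n q (A1 : 'M[R]_(p, n)) (A2 : 'M[R]_(q, n))
  (Ph : 'M[R]_n) : 'M[R[i]]_(p + (n + q)) :=
  toCmx (invmx (calM4 A1 A2 Ph) *m calA A1 A2).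

Definition Tmx (R : realType) p n q (A1 : 'M[R]_(p, n)) (A2 : 'M[R]_(q, n))
  (Ph : 'M[R]_n) : 'M[R[i]]_n :=
  toCmx (invmx Ph *m (Pmx A1 - A2^T *m A2)).

Definition ceigvec (F : fieldType) k (M : 'M[F]_k) (mu : F) (v : 'cV[F]_k) :=
  v != 0 /\ M *m v = mu *: v.

(* geometric multiplicity of mu for M acting on column vectors:
   dim N(M - mu I).  The row space of eigenspace M^T mu is exactly the set of
   transposes of the column vectors v with M v = mu v. *)
Definition geom_mult (F : fieldType) k (M : 'M[F]_k) (mu : F) : nat :=
  \rank (eigenspace M^T mu).

(* dim ( N(Phat - P) ∩ N(A2) ) over R; kermx X^T has as row space the
   transposes of the column null space of X *)
Definition dnull (R : realType) p n q (A1 : 'M[R]_(p, n)) (A2 : 'M[R]_(q, n))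
  (Ph : 'M[R]_n) : nat :=
  \rank (kermx (Ph - Pmx A1)^T :&: kermx A2^T)%MS.

Definition xpart p n q (F : fieldType) (v : 'cV[F]_(p + (n + q))) : 'cV[F]_p := usubmx v.
Definition ypart p n q (F : fieldType) (v : 'cV[F]_(p + (n + q))) : 'cV[F]_n := usubmx (dsubmx v).
Definition zpart p n q (F : fieldType) (v : 'cV[F]_(p + (n + q))) : 'cV[F]_q := dsubmx (dsubmx v).
Definition mk3 p n q (F : fieldType) (x : 'cV[F]_p) (y : 'cV[F]_n) (z : 'cV[F]_q)
  : 'cV[F]_(p + (n + q)) := col_mx x (col_mx y z).

(* Main.v *)
Require Import Defs.
From HB Require Import structures.
From mathcomp Require Import all_boot all_order all_algebra.
From mathcomp Require Import reals complex.
From mathcomp Require Import ring lra zify.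
Import Order.TTheory GRing.Theory Num.Theory.
Local Open Scope ring_scope.
Set Implicit Arguments. Unset Strict Implicit.


Lemma eq_char (F:fieldType) p n q (a1:'M[F]_(p,n)) (a2 : 'M[F]_(q,n)) (ph : 'M[F]_n) (mu:F) x y z :
  block_mx 1%:M (row_mx a1 0) 0 (block_mx (a1^T *m a1) a2^T a2 1%:M) *m mk3 x y z
  = mu *: (block_mx 1%:M (row_mx a1 0) 0 (block_mx ph a2^T 0 1%:M) *m mk3 x y z) <->
  [/\ x + a1 *m y = mu *: (x + a1 *m y), a1^T *m a1 *m y + a2^T *m z = mu *: (ph *m y + a2^T *m z) & a2 *m y + z = mu *: z].
Proof.
rewrite /mk3 !mul_block_col !mul_row_col !mul1mx !mul0mx !add0r !addr0 !scale_col_mx.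
split.
  move=> /eq_col_mx [h1 /eq_col_mx [h2 h3]]; done.
by case=> h1 h2 h3; rewrite -h1 -h2 -h3.
Qed.

Lemma spd_unit (R : realType) k (S : 'M[R]_k) : spd S -> S \in unitmx.
Proof.
case=> sym pos; rewrite unitmxE unitfE; apply/negP => /det0P [v nz vS].
have := pos v^T; rewrite trmx_eq0 => /(_ nz).
have -> : v^T^T *m S *m v^T = 0.
  by rewrite trmxK vS mul0mx.
by rewrite mxE ltxx.
Qed.

Lemma M4_unit (R : realType) p n q (A1 : 'M[R]_(p, n)) (A2 : 'M[R]_(q, n)) Ph :
  Ph \in unitmx -> calM4 A1 A2 Ph \in unitmx.
Proof.
move=> u; rewrite unitmxE /calM4 det_ublock det1 mul1r det_ublock det1 mulr1 -unitmxE //.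
Qed.

Section S.
Variables (R : realType) (p n q : nat) (A1 : 'M[R]_(p, n)) (A2 : 'M[R]_(q, n)) (Ph : 'M[R]_n).

Lemma toC_calA : toCmx (calA A1 A2) =
  block_mx 1%:M (row_mx (toCmx A1) 0) 0 (block_mx ((toCmx A1)^T *m toCmx A1) (toCmx A2)^T (toCmx A2) 1%:M).
Proof.
by rewrite /toCmx /calA /Pmx !map_block_mx !map_row_mx !map_mx1 !map_mx0 map_mxM !map_trmx.
Qed.

Lemma toC_calM4 : toCmx (calM4 A1 A2 Ph) =
  block_mx 1%:M (row_mx (toCmx A1) 0) 0 (block_mx (toCmx Ph) (toCmx A2)^T 0 1%:M).
Proof.
by rewrite /toCmx /calM4 !map_block_mx !map_row_mx !map_mx1 !map_mx0 !map_trmx.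
Qed.

Lemma precM_eig (mu : R[i]) v : Ph \in unitmx ->
  precM A1 A2 Ph *m v = mu *: v <->
  [/\ xpart v + toCmx A1 *m ypart v = mu *: (xpart v + toCmx A1 *m ypart v),
      (toCmx A1)^T *m toCmx A1 *m ypart v + (toCmx A2)^T *m zpart v
        = mu *: (toCmx Ph *m ypart v + (toCmx A2)^T *m zpart v)
    & toCmx A2 *m ypart v + zpart v = mu *: zpart v].
Proof.
move=> uPh; have uM : toCmx (calM4 A1 A2 Ph) \in unitmx by rewrite /toCmx map_unitmx M4_unit.
rewrite -eq_char /mk3 /xpart /ypart /zpart !vsubmxK -toC_calA -toC_calM4.
rewrite /precM /toCmx map_mxM map_invmx -mulmxA.
split => [h | h].
  by rewrite -[X in X = _](mulKVmx uM) h -scalemxAr.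
by rewrite h -scalemxAr mulKmx.
Qed.
End S.



Section G.
Variables (F : fieldType) (p n q : nat) (a1 : 'M[F]_(p,n)) (a2 : 'M[F]_(q,n)) (ph : 'M[F]_n).
Hypothesis uph : ph \in unitmx.
Let S := a1^T *m a1 - a2^T *m a2.

Lemma fwd mu (x : 'cV_p) (y : 'cV_n) (z : 'cV_q) : mu != 1 ->
  x + a1 *m y = mu *: (x + a1 *m y) ->
  a1^T *m a1 *m y + a2^T *m z = mu *: (ph *m y + a2^T *m z) ->
  a2 *m y + z = mu *: z ->
  [/\ invmx ph *m S *m y = mu *: y, x = - (a1 *m y) & z = (mu - 1)^-1 *: (a2 *m y)].
Proof.
move=> mu1 e1 e2 e3.
have mu1' : mu - 1 != 0 by rewrite subr_eq0.
have e3' : a2 *m y = (mu - 1) *: z.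
  by rewrite scalerBl scale1r -e3 addrK.
split.
- have hS : S *m y = mu *: (ph *m y).
    rewrite /S mulmxBl -[a2^T *m a2 *m y]mulmxA;rewrite e3' -scalemxAr scalerBl scale1r.
    move/eqP: e2; rewrite scalerDr -subr_eq => /eqP <-.
    by rewrite opprB addrA.
  by rewrite -mulmxA hS -scalemxAr mulKmx.
- apply/eqP; rewrite -subr_eq0 opprK; apply/eqP.
  have : (1 - mu) *: (x + a1 *m y) = 0 by rewrite scalerBl scale1r -e1 subrr.
  by move/eqP; rewrite scalemx_eq0 subr_eq0 eq_sym (negbTE mu1) => /eqP.
- by rewrite e3' scalerA mulVf // scale1r.
Qed.

Lemma bwd mu (y : 'cV_n) : mu != 1 -> invmx ph *m S *m y = mu *: y ->
  let x := - (a1 *m y) in let z := (mu - 1)^-1 *: (a2 *m y) in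
  [/\ x + a1 *m y = mu *: (x + a1 *m y),
      a1^T *m a1 *m y + a2^T *m z = mu *: (ph *m y + a2^T *m z)
    & a2 *m y + z = mu *: z].
Proof.
move=> mu1 hT x z.
have mu1' : mu - 1 != 0 by rewrite subr_eq0.
have hc : 1 + (mu - 1)^-1 = mu * (mu - 1)^-1.
  by apply: (mulIf mu1'); rewrite mulrDl mul1r mulfVK // mulVf // subrK.
have hS : S *m y = mu *: (ph *m y).
  by rewrite -[S *m y](mulKVmx uph) [invmx ph *m (S *m y)]mulmxA hT -scalemxAr.
split.
- by rewrite /x addNr scaler0.
- move: hS; rewrite /S mulmxBl => /eqP; rewrite subr_eq => /eqP ->.
  rewrite /z -!scalemxAr scalerDr scalerA -hc scalerDl scale1r mulmxA.
  by rewrite addrA.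
- by rewrite /z scalerA -hc scalerDl scale1r.
Qed.
End G.



Section H.
Variable R : realType.
Local Notation C := R[i].

Lemma herm k (S : 'M[R]_k) (a b : 'cV[R]_k) : S^T = S ->
  ((toCmx a - 'i%C *: toCmx b)^T *m toCmx S *m (toCmx a + 'i%C *: toCmx b)) 0 0
  = real_complex R ((a^T *m S *m a) 0 0 + (b^T *m S *m b) 0 0).
Proof.
move=> sym.
have e : forall u v : 'cV[R]_k, (toCmx u)^T *m toCmx S *m toCmx v = toCmx (u^T *m S *m v).
  by move=> u v; rewrite /toCmx !map_mxM map_trmx.
have sw : (b^T *m S *m a) 0 0 = (a^T *m S *m b) 0 0.
  have -> : (b^T *m S *m a) 0 0 = ((b^T *m S *m a)^T) 0 0 by rewrite [RHS]mxE.
  by rewrite !trmx_mul trmxK sym mulmxA.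
rewrite linearB linearZ /= mulmxBl !mulmxDr !mulmxBl -!scalemxAl -!scalemxAr !e.
move: sw; move: (a^T *m S *m a) (a^T *m S *m b) (b^T *m S *m b) (b^T *m S *m a) => u w t w' sw.
rewrite !mxE sw mulrA -expr2 sqr_i rmorphD /=. ring.
Qed.

Lemma decomp k (y : 'cV[C]_k) :
  y = toCmx (map_mx (@complex.Re R) y) + 'i%C *: toCmx (map_mx (@complex.Im R) y) /\
  map_mx conjc y = toCmx (map_mx (@complex.Re R) y) - 'i%C *: toCmx (map_mx (@complex.Im R) y).
Proof.
split; apply/matrixP => i j; rewrite !mxE; case: (y i j) => r s; simpc => //=.
Qed.

Lemma spd_ge0 k (S : 'M[R]_k) (x : 'cV[R]_k) : spd S -> 0 <= (x^T *m S *m x) 0 0.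
Proof.
case=> _ pos; have [->|nz] := eqVneq x 0; last by apply: ltW; apply: pos.
by rewrite trmx0 mul0mx mul0mx mxE.
Qed.

Definition qf k (y : 'cV[C]_k) (X : 'M[C]_k) := ((map_mx conjc y)^T *m X *m y) 0 0.

Lemma qf_pos k (S : 'M[R]_k) (y : 'cV[C]_k) : spd S -> y != 0 ->
  exists2 r : R, 0 < r & qf y (toCmx S) = real_complex R r.
Proof.
move=> hS nz; have [hy hyc] := decomp y.
set a := map_mx _ y in hy hyc; set b := map_mx _ y in hy hyc.
rewrite /qf hyc [X in _ *m X]hy herm; last by case: hS.
eexists; last reflexivity.
have ha := spd_ge0 a hS; have hb := spd_ge0 b hS.
have [az|anz] := eqVneq a 0.
  have [bz|bnz] := eqVneq b 0.
    by move: nz; rewrite hy az bz /toCmx !map_mx0 scaler0 addr0 eqxx.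
  have : 0 < (b^T *m S *m b) 0 0 by case: hS => _; apply.
  move: ha hb; lra.
have : 0 < (a^T *m S *m a) 0 0 by case: hS => _; apply.
move: ha hb; lra.
Qed.

Lemma qfD k (y : 'cV[C]_k) X Y : qf y (X + Y) = qf y X + qf y Y.
Proof. by rewrite /qf mulmxDr mulmxDl mxE. Qed.
Lemma qfN k (y : 'cV[C]_k) X : qf y (- X) = - qf y X.
Proof. by rewrite /qf mulmxN mulNmx mxE. Qed.
Lemma qfZ k (y : 'cV[C]_k) c X : qf y (c *: X) = c * qf y X.
Proof. by rewrite /qf -scalemxAr -scalemxAl mxE. Qed.

Lemma eig_real k (S Ph : 'M[R]_k) (mu : C) (y : 'cV[C]_k) :
  spd S -> spd Ph -> spd (2%:R *: Ph - S) -> y != 0 ->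
  toCmx S *m y = mu *: (toCmx Ph *m y) ->
  mu \is Num.real /\ 0 < mu /\ mu < 2%:R.
Proof.
move=> hS hP h2 nz e.
have [rS rS0 qS] := qf_pos hS nz.
have [rP rP0 qP] := qf_pos hP nz.
have [r2 r20 q2] := qf_pos h2 nz.
have e1 : qf y (toCmx S) = mu * qf y (toCmx Ph).
  by rewrite /qf -mulmxA e -scalemxAr mulmxA mxE.
have e2 : qf y (toCmx (2%:R *: Ph - S)) = 2%:R * qf y (toCmx Ph) - qf y (toCmx S).
  by rewrite /toCmx map_mxB map_mxZ qfD qfN qfZ rmorph_nat.
rewrite qS qP in e1; rewrite q2 qP qS in e2.
have rPnz : real_complex R rP != 0 by rewrite (inj_eq (@complexI R)) gt_eqF.
have hmu : mu = real_complex R (rS / rP).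
  by rewrite rmorphM fmorphV /= e1 mulfK.
have e2' : r2 = 2%:R * rP - rS.
  by apply: (@complexI R); rewrite e2 rmorphB rmorphM rmorph_nat.
have lt2 : rS / rP < 2%:R by rewrite ltr_pdivrMr //; move: r20; rewrite e2'; lra.
have gt0 : 0 < rS / rP by rewrite divr_gt0.
have pos : 0 < mu by rewrite hmu -(rmorph0 (real_complex R)) ltcR.
split; first exact: gtr0_real.
split=> //.
by rewrite hmu -(rmorph_nat (real_complex R)) ltcR.
Qed.
End H.



Section R.
Variable F : fieldType.

Lemma rank_col0 m1 m2 n (X : 'M[F]_(m2, n)) : \rank (col_mx (0 : 'M_(m1, n)) X) = \rank X.
Proof. by rewrite -(addsmxE 0 X).1 (adds0mx _ X).1. Qed.

Lemma rank_colr0 m1 m2 n (X : 'M[F]_(m1, n)) : \rank (col_mx X (0 : 'M_(m2, n))) = \rank X.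
Proof. by rewrite -(addsmxE X 0).1 (addsmx0 _ X).1. Qed.

Lemma rank_row0 m n1 n2 (X : 'M[F]_(m, n2)) : \rank (row_mx (0 : 'M_(m, n1)) X) = \rank X.
Proof. by rewrite -mxrank_tr tr_row_mx trmx0 rank_col0 mxrank_tr. Qed.

Lemma rank_rowr0 m n1 n2 (X : 'M[F]_(m, n1)) : \rank (row_mx X (0 : 'M_(m, n2))) = \rank X.
Proof. by rewrite -mxrank_tr tr_row_mx trmx0 rank_colr0 mxrank_tr. Qed.

Lemma rank_transfer a b (G1 : 'M[F]_a) (G2 : 'M[F]_b) mu (Kc : 'M_(b,a)) (Lc : 'M_(a,b)) :
 (forall v : 'cV_a, G1 *m v = mu *: v -> G2 *m (Kc *m v) = mu *: (Kc *m v)) ->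
 (forall v : 'cV_a, G1 *m v = mu *: v -> Lc *m (Kc *m v) = v) ->
 (\rank (eigenspace G1^T mu) <= \rank (eigenspace G2^T mu))%N.
Proof.
move=> h1 h2; set E := eigenspace G1^T mu.
have hv : forall i, G1 *m (row i E)^T = mu *: (row i E)^T.
  move=> i; have /eigenspaceP : (row i E <= E)%MS by apply: row_sub.
  by move=> /(congr1 trmx); rewrite trmx_mul trmxK linearZ.
have s1 : (E *m Kc^T <= eigenspace G2^T mu)%MS.
  apply/row_subP => i; rewrite row_mul; apply/eigenspaceP; apply: trmx_inj.
  by rewrite !trmx_mul !trmxK linearZ /= trmx_mul trmxK (h1 _ (hv i)).
have s2 : E *m Kc^T *m Lc^T = E.
  apply/row_matrixP => i; rewrite 2!row_mul; apply: trmx_inj.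
  by rewrite 2!trmx_mul !trmxK (h2 _ (hv i)).
rewrite -s2; apply: leq_trans (mxrankM_maxl _ _) _; exact: mxrankS.
Qed.

Lemma rank_sum_eig k (g : 'M[F]_k) (s : seq F) : uniq s ->
  \rank (\sum_(a <- s) eigenspace g a)%MS = (\sum_(a <- s) \rank (eigenspace g a))%N.
Proof.
move=> us.
rewrite (big_nth 0) big_mkord (big_nth 0) big_mkord.
have inj : {in predT &, injective (fun i : 'I_(size s) => nth 0 s i)}.
  by move=> i j _ _ /eqP; rewrite nth_uniq // => /eqP /val_inj.
move: (mxdirect_sum_eigenspace g inj) => /mxdirectP /= ->.
done.
Qed.

Lemma Mc_unit p n q (a1 : 'M[F]_(p,n)) (a2 : 'M[F]_(q,n)) (ph : 'M[F]_n) : ph \in unitmx ->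
  block_mx 1%:M (row_mx a1 0) 0 (block_mx ph a2^T 0 1%:M) \in unitmx.
Proof. by move=> u; rewrite unitmxE !det_ublock !det1 mul1r mulr1 -unitmxE. Qed.

Lemma rank_eig1 p n q (a1 : 'M[F]_(p,n)) (a2 : 'M[F]_(q,n)) (ph : 'M[F]_n) : ph \in unitmx ->
  \rank (eigenspace (invmx (block_mx 1%:M (row_mx a1 0) 0 (block_mx ph a2^T 0 1%:M))
     *m block_mx 1%:M (row_mx a1 0) 0 (block_mx (a1^T *m a1) a2^T a2 1%:M))^T 1)
  = (p + q + \rank (kermx (ph - a1^T *m a1)^T :&: kermx a2^T)%MS)%N.
Proof.
move=> uph; have uM := Mc_unit a1 a2 uph.
set Mc := block_mx 1%:M _ _ _ in uM *; set Ac := block_mx 1%:M _ _ (block_mx (a1^T *m a1) _ _ _).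
rewrite /eigenspace mxrank_ker.
have -> : (invmx Mc *m Ac)^T - 1%:M = (invmx Mc *m Ac - 1%:M)^T by rewrite linearB /= trmx1.
have -> : invmx Mc *m Ac - 1%:M = invmx Mc *m (Ac - Mc) by rewrite mulmxBr mulVmx.
rewrite mxrank_tr.
have rf : row_full (invmx Mc) by rewrite row_full_unit unitmx_inv.
rewrite (eqmxMfull (Ac - Mc) rf).1.
have -> : Ac - Mc = block_mx 0 0 0 (block_mx (a1^T *m a1 - ph) 0 a2 0).
  by rewrite /Ac /Mc opp_block_mx add_block_mx opp_block_mx add_block_mx !subrr !oppr0 !addr0.
rewrite block_mxEv row_mx0 rank_col0 rank_row0 block_mxEh col_mx0 rank_rowr0.
set X := col_mx _ _.
have eK : (kermx X^T == kermx (ph - a1^T *m a1)^T :&: kermx a2^T)%MS.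
  apply/andP; split.
    rewrite sub_capmx; have := mulmx_ker X^T; rewrite /X tr_col_mx mul_mx_row.
    move=> /eqP; rewrite row_mx_eq0 => /andP[/eqP h1 /eqP h2].
    apply/andP; split; apply/sub_kermxP => //.
    have -> : (ph - a1^T *m a1)^T = - (a1^T *m a1 - ph)^T.
      by rewrite !linearB /= opprK [RHS]addrC.
    by rewrite mulmxN h1 oppr0.
  have : (kermx (ph - a1^T *m a1)^T :&: kermx a2^T <= kermx (ph - a1^T *m a1)^T :&: kermx a2^T)%MS by [].
  rewrite sub_capmx => /andP[/sub_kermxP g1 /sub_kermxP g2].
  apply/sub_kermxP; rewrite /X tr_col_mx mul_mx_row g2.
  have -> : (a1^T *m a1 - ph)^T = - (ph - a1^T *m a1)^T.
    by rewrite !linearB /= opprK [RHS]addrC.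
  by rewrite mulmxN g1 oppr0 row_mx0.
rewrite -(eqmx_rank eK) mxrank_ker mxrank_tr.
have := rank_leq_col X; lia.
Qed.
End R.

Unset Implicit Arguments. Set Strict Implicit.
Theorem theorem5 (R : realType) (p n q : nat)
  (A1 : 'M[R]_(p, n)) (A2 : 'M[R]_(q, n)) (Ph : 'M[R]_n) :
  \rank A1 = n ->
  spd (Pmx A1 - A2^T *m A2) ->
  spd Ph ->
  spd (2%:R *: Ph - Pmx A1 + A2^T *m A2) ->
  let M := precM A1 A2 Ph in
  let T := Tmx A1 A2 Ph in
  let d := dnull A1 A2 Ph in
  (* (i) mu = 1: eigenspace = {(x; y; z) : (Phat - P) y = 0, A2 y = 0},
     of dimension p + q + d *)
  ((forall v : 'cV[R[i]]_(p + (n + q)),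
      M *m v = v <->
      (toCmx (Ph - Pmx A1) *m ypart v = 0 /\ toCmx A2 *m ypart v = 0))
   /\ geom_mult M 1 = (p + q + d)%N)
  /\
  (* (ii) eigenvectors for mu <> 1 *)
  ((forall (mu : R[i]) (v : 'cV[R[i]]_(p + (n + q))), mu != 1 ->
      ceigvec M mu v <->
      exists y : 'cV[R[i]]_n, ceigvec T mu y /\
        v = mk3 (- (toCmx A1 *m y)) y ((mu - 1)^-1 *: (toCmx A2 *m y)))
   /\ (forall mu : R[i], mu != 1 -> geom_mult M mu = geom_mult T mu)
   /\ (forall s : seq R[i], uniq s ->
        (forall mu, mu \in s <-> (mu != 1 /\ exists v, ceigvec M mu v)) ->
        let h := \rank (\sum_(mu <- s) eigenspace M^T mu)%MS in
        (forall mu, mu \in s -> (geom_mult M mu <= h)%N) /\ (h <= n)%N /\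
        \rank (eigenspace M^T 1 + \sum_(mu <- s) eigenspace M^T mu)%MS
          = (p + q + d + h)%N))
  /\
  (* (iii) all eigenvalues are real and in (0, 2) *)
  (forall (mu : R[i]) (v : 'cV[R[i]]_(p + (n + q))), ceigvec M mu v ->
     mu \is Num.real /\ 0 < mu /\ mu < 2%:R).
Proof.
move=> rA hS hPh h2 M T d.
have uPh := spd_unit hPh.
have uph : toCmx Ph \in unitmx by rewrite /toCmx map_unitmx.
set a1 := toCmx A1; set a2 := toCmx A2; set ph := toCmx Ph.
have eigM : forall mu v, M *m v = mu *: v <->
  [/\ xpart v + a1 *m ypart v = mu *: (xpart v + a1 *m ypart v),
      a1^T *m a1 *m ypart v + a2^T *m zpart v = mu *: (ph *m ypart v + a2^T *m zpart v)
    & a2 *m ypart v + zpart v = mu *: zpart v].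
  by move=> mu v; apply: precM_eig.
have hT : T = invmx ph *m (a1^T *m a1 - a2^T *m a2).
  by rewrite /T /Tmx /toCmx map_mxM map_invmx map_mxB !map_mxM !map_trmx.
have hM : M = invmx (block_mx 1%:M (row_mx a1 0) 0 (block_mx ph a2^T 0 1%:M))
     *m block_mx 1%:M (row_mx a1 0) 0 (block_mx (a1^T *m a1) a2^T a2 1%:M).
  by rewrite /M /precM /toCmx map_mxM map_invmx -!/(toCmx _) toC_calA toC_calM4.
have v3 : forall v : 'cV[R[i]]_(p + (n + q)), v = mk3 (xpart v) (ypart v) (zpart v).
  by move=> v; rewrite /mk3 /xpart /ypart /zpart !vsubmxK.
have p3 : forall (x : 'cV[R[i]]_p) (y : 'cV[R[i]]_n) (z : 'cV[R[i]]_q), [/\ xpart (mk3 x y z) = x, ypart (mk3 x y z) = y & zpart (mk3 x y z) = z].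
  by move=> x y z; rewrite /xpart /ypart /zpart /mk3 !col_mxKd !col_mxKu.
have fw : forall mu v, mu != 1 -> M *m v = mu *: v ->
    T *m ypart v = mu *: ypart v /\
    v = mk3 (- (a1 *m ypart v)) (ypart v) ((mu - 1)^-1 *: (a2 *m ypart v)).
  move=> mu v mu1 /eigM [e1 e2 e3].
  have [f1 f2 f3] := fwd uph mu1 e1 e2 e3.
  by split; [rewrite hT | rewrite {1}[v]v3 f2 f3].
have bw : forall mu y, mu != 1 -> T *m y = mu *: y ->
    M *m mk3 (- (a1 *m y)) y ((mu - 1)^-1 *: (a2 *m y))
    = mu *: mk3 (- (a1 *m y)) y ((mu - 1)^-1 *: (a2 *m y)).
  move=> mu y mu1 ey; apply/eigM.
  have [-> -> ->] := p3 (- (a1 *m y)) y ((mu - 1)^-1 *: (a2 *m y)).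
  by have [] := bwd uph mu1 (etrans (esym (congr1 (fun X => X *m y) hT)) ey).
have mk0 : forall mu (y : 'cV[R[i]]_n), mk3 (- (a1 *m y)) y ((mu - 1)^-1 *: (a2 *m y)) = 0 -> y = 0.
  move=> mu y h; have [_ hy _] := p3 (- (a1 *m y)) y ((mu - 1)^-1 *: (a2 *m y)).
  by rewrite -hy h /ypart !linear0.
have I1 : forall v : 'cV[R[i]]_(p + (n + q)), M *m v = v <->
    (toCmx (Ph - Pmx A1) *m ypart v = 0 /\ toCmx A2 *m ypart v = 0).
  have tPP : toCmx (Ph - Pmx A1) = ph - a1^T *m a1.
    by rewrite /toCmx map_mxB /Pmx map_mxM map_trmx.
  move=> v; rewrite tPP -/a2; split.
    move=> e; have /eigM [_ e2 e3] : M *m v = 1 *: v by rewrite scale1r.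
    rewrite !scale1r in e2 e3; split.
      by apply/eqP; rewrite mulmxBl subr_eq0; apply/eqP; move/addIr: e2 => ->.
    by move/eqP: e3; rewrite -subr_eq0 addrK => /eqP.
  move=> [g1 g2]; rewrite -[RHS]scale1r; apply/eigM; rewrite !scale1r; split => //.
    by move: g1; rewrite mulmxBl => /eqP; rewrite subr_eq0 => /eqP ->.
  by rewrite g2 add0r.
have I2 : geom_mult M 1 = (p + q + d)%N.
  rewrite /geom_mult hM rank_eig1 //.
  rewrite /d /dnull -(mxrank_map (real_complex R)) map_capmx !map_kermx -!map_trmx map_mxB /Pmx map_mxM -map_trmx.
  rewrite /a1 /a2 /ph /toCmx.
  reflexivity.
have II1 : forall (mu : R[i]) (v : 'cV[R[i]]_(p + (n + q))), mu != 1 ->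
      ceigvec M mu v <->
      exists y : 'cV[R[i]]_n, ceigvec T mu y /\
        v = mk3 (- (toCmx A1 *m y)) y ((mu - 1)^-1 *: (toCmx A2 *m y)).
  move=> mu v mu1; split.
    move=> [nz e]; have [eT ev] := fw mu v mu1 e.
    exists (ypart v); split => //; split => //.
    apply/eqP => y0; move: nz; rewrite ev y0 !mulmx0 oppr0 scaler0 /mk3 !col_mx0.
    by rewrite eqxx.
  move=> [y [[nzy ey] ->]]; split; last exact: bw.
  by apply/eqP => /mk0 y0; rewrite y0 eqxx in nzy.
have II2 : forall mu : R[i], mu != 1 -> geom_mult M mu = geom_mult T mu.
  move=> mu mu1.
  pose Kc : 'M[R[i]]_(n, p + (n + q)) := row_mx 0 (row_mx 1%:M 0).
  pose Lc : 'M[R[i]]_(p + (n + q), n) := col_mx (- a1) (col_mx 1%:M ((mu - 1)^-1 *: a2)).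
  have hK : forall v, Kc *m v = ypart v.
    by move=> v; rewrite {1}[v]v3 /mk3 /Kc !mul_row_col !mul0mx mul1mx add0r addr0.
  have hL : forall y, Lc *m y = mk3 (- (a1 *m y)) y ((mu - 1)^-1 *: (a2 *m y)).
    by move=> y; rewrite /Lc /mk3 !mul_col_mx mulNmx mul1mx -scalemxAl.
  apply/eqP; rewrite eqn_leq /geom_mult; apply/andP; split.
    apply: (rank_transfer (Kc:=Kc) (Lc:=Lc)) => v ev.
      by rewrite hK; exact: (fw mu v mu1 ev).1.
    by rewrite hK hL -(fw mu v mu1 ev).2.
  apply: (rank_transfer (Kc:=Lc) (Lc:=Kc)) => y ey.
    by rewrite hL; exact: bw.
  by rewrite hL hK; have [_ -> _] := p3 (- (a1 *m y)) y ((mu - 1)^-1 *: (a2 *m y)).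
have III : forall (mu : R[i]) (v : 'cV[R[i]]_(p + (n + q))), ceigvec M mu v ->
     mu \is Num.real /\ 0 < mu /\ mu < 2%:R.
  move=> mu v [nz e]; have [->|mu1] := eqVneq mu 1.
    by split; [exact: real1 | split; [exact: ltr01 | rewrite ltr1n]].
  have [eT ev] := fw mu v mu1 e.
  have nzy : ypart v != 0.
    apply/eqP => y0; move: nz; rewrite ev y0 !mulmx0 oppr0 scaler0 /mk3 !col_mx0.
    by rewrite eqxx.
  apply: (@eig_real R n (Pmx A1 - A2^T *m A2) Ph mu (ypart v) hS hPh _ nzy).
    rewrite (_ : 2%:R *: Ph - (Pmx A1 - A2^T *m A2) = 2%:R *: Ph - Pmx A1 + A2^T *m A2) //.
    by rewrite opprB addrA addrAC.
  rewrite (_ : toCmx _ = a1^T *m a1 - a2^T *m a2); last first.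
    by rewrite /toCmx map_mxB /Pmx !map_mxM !map_trmx.
  rewrite -[LHS](mulKVmx uph) [invmx ph *m (_ *m _)]mulmxA -hT eT -scalemxAr //.
have II3 : forall s : seq R[i], uniq s ->
        (forall mu, mu \in s <-> (mu != 1 /\ exists v, ceigvec M mu v)) ->
        let h := \rank (\sum_(mu <- s) eigenspace M^T mu)%MS in
        (forall mu, mu \in s -> (geom_mult M mu <= h)%N) /\ (h <= n)%N /\
        \rank (eigenspace M^T 1 + \sum_(mu <- s) eigenspace M^T mu)%MS
          = (p + q + d + h)%N.
  move=> s us hs h.
  have s1 : forall mu, mu \in s -> mu != 1 by move=> mu /hs [].
  have eqs : (\sum_(mu <- s) \rank (eigenspace M^T mu) = \sum_(mu <- s) \rank (eigenspace T^T mu))%N.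
    by apply: eq_big_seq => mu /s1; exact: II2.
  have hh : h = (\sum_(mu <- s) \rank (eigenspace M^T mu))%N by rewrite /h rank_sum_eig.
  split.
    move=> mu ms; rewrite /geom_mult /h; apply: mxrankS.
    by rewrite (big_rem mu ms) /=; exact: addsmxSl.
  split.
    by rewrite hh eqs -rank_sum_eig //; exact: rank_leq_col.
  have u1 : uniq (1 :: s) by rewrite /= us andbT; apply/negP => /s1; rewrite eqxx.
  have -> : (eigenspace M^T 1 + \sum_(mu <- s) eigenspace M^T mu)%MS
      = (\sum_(mu <- 1 :: s) eigenspace M^T mu)%MS by rewrite big_cons.
  by rewrite rank_sum_eig // big_cons -hh -I2.
split; first by split.
split; last exact: III.
split; first exact: II1.
by split; [exact: II2 | exact: II3].
Qed.
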